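(* Let $p\in(0,1)$ and let $(\lambda_n)_{n\ge1}$ be a sequence with $\lambda_1=1$ and $0<\lambda_n\le\lambda_{n-1}$ for all $n>1$. Let $r_1,r_2,\dots$ be $\{0,1\}$-valued random variables with $\Pr(r_1=1)=p$ and, for every $n\ge2$, $\Pr(r_n=1\mid r_1,\dots,r_{n-1})=\lambda_n p+(1-\lambda_n)\bar p_{n-1}$, where $\bar p_m=\frac1m\sum_{i=1}^m r_i$. Define $\hat r_1=r_1$, $\hat r_i=\frac{r_i-(1-\lambda_i)\bar p_{i-1}}{\lambda_i}$ for $i\ge2$, and for positive weights $(\omega_i)$ let $\hat p_n=\frac{\sum_{i=1}^n\omega_i\hat r_i}{\sum_{i=1}^n\omega_i}$. (a) If $\omega_i=1$ for all $i$ and $\sum_{i=1}^n\lambda_i^{-2}=o(n^2)$ as $n\to\infty$, then $\hat p_n$ is a consistent estimator of $p$, i.e. $\Pr(|\hat p_n-p|>\epsilon)\to0$ for every $\epsilon>0$. (b) If $\omega_i=\lambda_i$ for all $i$ and $n=o\big((\sum_{i=1}^n\lambda_i)^2\big)$ as $n\to\infty$, then $\hat p_n$ is a consistent estimator of $p$. *)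

(* Defs.v *)
From HB Require Import structures.
From mathcomp Require Import all_boot all_order all_algebra.
From mathcomp Require Import all_classical all_reals all_analysis.
Set Implicit Arguments. Unset Strict Implicit. Unset Printing Implicit Defensive.
Import Order.TTheory GRing.Theory Num.Theory.
Import numFieldNormedType.Exports.
Local Open Scope ring_scope.
Local Open Scope classical_set_scope.

(* Indices are 1-based as in the paper: r 1, r 2, ...; r 0 is unused. *)

Section Defs.
Context {R : realType} {T : Type}.

Definition pbar (r : nat -> T -> R) (m : nat) (x : T) : R :=
  (\sum_(1 <= i < m.+1) r i x) / m%:R.

Definition rhat (lam : nat -> R) (r : nat -> T -> R) (i : nat) (x : T) : R :=
  if i == 1%N then r 1%N x
  else (r i x - (1 - lam i) * pbar r i.-1 x) / lam i.

Definition phat (w lam : nat -> R) (r : nat -> T -> R) (n : nat) (x : T) : R :=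
  (\sum_(1 <= i < n.+1) w i * rhat lam r i x) / (\sum_(1 <= i < n.+1) w i).
End Defs.

Definition history {R : realType} {T : Type} (r : nat -> T -> R)
    (n : nat) (b : nat -> bool) : set T :=
  [set x | forall i, (1 <= i < n)%N -> r i x = (b i)%:R].

(* The model: r_i are {0,1}-valued random variables, P(r_1 = 1) = p, and for
   n >= 2, P(r_n = 1 | r_1,...,r_{n-1}) = lam_n p + (1 - lam_n) pbar_{n-1},
   stated as elementary conditional probability given the (finitely valued)
   history vector: for every history b,
   P(history b /\ r_n = 1) = (lam_n p + (1-lam_n) * mean(b)) * P(history b). *)
Definition reinforced_model {R : realType} {d : measure_display}
    {T : measurableType d} (P : probability T R) (p : R) (lam : nat -> R)
    (r : nat -> T -> R) : Prop :=
  [/\ (forall i, measurable_fun setT (r i)),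
      (forall i x, r i x = 0 \/ r i x = 1),
      P [set x | r 1%N x = 1] = p%:E &
      (forall n (b : nat -> bool), (2 <= n)%N ->
         P (history r n b `&` [set x | r n x = 1]) =
         ((lam n * p + (1 - lam n) *
             ((\sum_(1 <= i < n) (b i)%:R) / n.-1%:R))%:E
          * P (history r n b))%E)].

Definition consistent {R : realType} {d : measure_display}
    {T : measurableType d} (P : probability T R) (est : nat -> T -> R) (p : R)
    : Prop :=
  forall eps : R, 0 < eps ->
    (fun n => P [set x | eps < `|est n x - p|]) @ \oo --> 0%E.

(* Main.v *)
Require Import Defs.
From HB Require Import structures.
From mathcomp Require Import all_boot all_order all_algebra.
From mathcomp Require Import all_classical all_reals all_analysis.
From mathcomp Require Import ring lra.
Import Order.TTheory GRing.Theory Num.Theory.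
Import numFieldNormedType.Exports.
Local Open Scope ring_scope.
Local Open Scope classical_set_scope.

Section Comb.
Context {R : realType}.

Definition upd (b : nat -> bool) (k : nat) (c : bool) : nat -> bool :=
  fun i => if i == k then c else b i.

Fixpoint sumH (n : nat) (G : (nat -> bool) -> R) : R :=
  if n is m.+1 then sumH m (fun b => G (upd b m.+1 false) + G (upd b m.+1 true))
  else G (fun _ => false).

Lemma sumH_add n F G : sumH n (fun b => F b + G b) = sumH n F + sumH n G.
Proof.
elim: n F G => [|n IH] F G //=.
rewrite -IH; congr (sumH n _); apply: funext => b; ring.
Qed.

Lemma sumH_scale n c F : sumH n (fun b => c * F b) = c * sumH n F.
Proof.
elim: n F => [|n IH] F //=.
rewrite -IH; congr (sumH n _); apply: funext => b; ring.
Qed.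

Lemma sumH_le n F G : (forall b, F b <= G b) -> sumH n F <= sumH n G.
Proof.
elim: n F G => [|n IH] F G FG //=.
by apply: IH => b; apply: lerD.
Qed.

Definition rb (b : nat -> bool) : nat -> unit -> R := fun i _ => (b i)%:R.

Lemma pbar_loc {T1 T2 : Type} (r1 : nat -> T1 -> R) (r2 : nat -> T2 -> R) x y m :
  (forall i, (1 <= i <= m)%N -> r1 i x = r2 i y) -> pbar r1 m x = pbar r2 m y.
Proof.
move=> H; rewrite /pbar; congr (_ / _); apply: eq_big_nat => i /andP[i1 im].
by apply: H; rewrite i1 -ltnS.
Qed.

Lemma rhat_loc {T1 T2 : Type} lam (r1 : nat -> T1 -> R) (r2 : nat -> T2 -> R) x y k :
  (1 <= k)%N -> (forall i, (1 <= i <= k)%N -> r1 i x = r2 i y) ->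
  rhat lam r1 k x = rhat lam r2 k y.
Proof.
move=> k0 H; rewrite /rhat; case: ifP => [_|k1]; first by apply: H; rewrite leqnn k0.
rewrite H ?k0 ?leqnn // (@pbar_loc _ _ r1 r2 x y) // => i /andP[i1 ik].
by apply: H; rewrite i1 /= (leq_trans ik) // leq_pred.
Qed.

Lemma phat_loc {T1 T2 : Type} w lam (r1 : nat -> T1 -> R) (r2 : nat -> T2 -> R) x y n :
  (forall i, (1 <= i <= n)%N -> r1 i x = r2 i y) ->
  phat w lam r1 n x = phat w lam r2 n y.
Proof.
move=> H; rewrite /phat; congr (_ / _); apply: eq_big_nat => i /andP[i1 im].
congr (_ * _); apply: rhat_loc => // j /andP[j1 ji].
by apply: H; rewrite j1 (leq_trans ji) // -ltnS.
Qed.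
End Comb.

Section Prob.
Context (R : realType) (d : measure_display) (T : measurableType d)
  (P : probability T R) (r : nat -> T -> R)
  (rmeas : forall i, measurable_fun setT (r i))
  (r01 : forall i x, r i x = 0 \/ r i x = 1).

Definition Pr (A : set T) : R := fine (P A).

Lemma PrE A : measurable A -> P A = (Pr A)%:E.
Proof. by move=> mA; rewrite /Pr fineK //; apply: fin_num_measure. Qed.

Lemma Pr_ge0 A : 0 <= Pr A.
Proof. by rewrite /Pr; apply: fine_ge0; apply: measure_ge0. Qed.

Lemma PrT : Pr setT = 1.
Proof. by rewrite /Pr probability_setT. Qed.

Lemma Pr0 : Pr set0 = 0.
Proof. by rewrite /Pr measure0. Qed.

Lemma PrU A B : measurable A -> measurable B -> A `&` B = set0 ->
  Pr (A `|` B) = Pr A + Pr B.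
Proof.
move=> mA mB AB.
have H : P (A `|` B) = (P A + P B)%E := measureU P mA mB AB.
by move: H; rewrite !PrE //; [move=> [] | exact: measurableU].
Qed.

Lemma meas_r i (c : R) : measurable [set x | r i x = c].
Proof.
have := rmeas i measurableT [set c] (measurable_set1 c).
by rewrite setTI.
Qed.

Lemma hist0 b : history r 0 b = setT.
Proof. by apply/seteqP; split => x //= _ i /andP[]; case: i. Qed.

Lemma hist1 b : history r 1 b = setT.
Proof. by apply/seteqP; split => x //= _ i /andP[]; case: i => // -[]. Qed.

Lemma hist_upd n b c : history r n.+2 (upd b n.+1 c) =
  history r n.+1 b `&` [set x | r n.+1 x = c%:R].
Proof.
apply/seteqP; split => x /=.
- move=> H; split; last by rewrite (H n.+1) ?ltnSn // /upd eqxx.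
  move=> i /andP[i1 iln]; have := H i; rewrite /upd.
  rewrite (_ : (i == n.+1) = false); first by apply; rewrite i1 ltnW.
  by apply/negbTE; rewrite neq_ltn iln.
- move=> [H Hn] i /andP[i1 iln]; rewrite /upd; case: eqP => [->//|ne].
  apply: H; rewrite i1 /=; rewrite ltnS leq_eqVlt in iln.
  by case/orP: iln => // /eqP.
Qed.

Lemma meas_hist k b : measurable (history r k b).
Proof.
elim: k => [|k IH]; first by rewrite hist0.
case: k IH => [|k] IH; first by rewrite hist1.
have -> : history r k.+2 b = history r k.+1 b `&` [set x | r k.+1 x = (b k.+1)%:R].
  have := hist_upd k b (b k.+1).
  have -> : upd b k.+1 (b k.+1) = b.
    by apply: funext => i; rewrite /upd; case: eqP => [->|].
  done.
by apply: measurableI => //; apply: meas_r.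
Qed.

Lemma Pr_split A i : measurable A ->
  Pr A = Pr (A `&` [set x | r i x = 0]) + Pr (A `&` [set x | r i x = 1]).
Proof.
move=> mA; rewrite -PrU; last 3 first.
- by apply: measurableI => //; apply: meas_r.
- by apply: measurableI => //; apply: meas_r.
- apply/seteqP; split => x //= [[_ ->] [_]] /esym/eqP; rewrite oner_eq0.
  done.
congr Pr; apply/seteqP; split => x /=.
- by move=> Ax; case: (r01 i x) => ->; [left|right].
- by case=> -[].
Qed.

Lemma partition n A : measurable A ->
  Pr A = sumH n (fun b => Pr (A `&` history r n.+1 b)).
Proof.
move=> mA; elim: n => [|n IH] /=; first by rewrite hist1 setIT.
rewrite IH; congr (sumH n _); apply: funext => b.
rewrite !hist_upd /= mulr0n mulr1n !setIA.
by apply: Pr_split; apply: measurableI => //; apply: meas_hist.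
Qed.

Section Model.
Context (p : R) (lam : nat -> R) (lam1 : lam 1%N = 1)
  (lampos : forall n, (1 < n)%N -> 0 < lam n <= lam n.-1)
  (hp1 : P [set x | r 1%N x = 1] = p%:E)
  (hcond : forall n (b : nat -> bool), (2 <= n)%N ->
         P (history r n b `&` [set x | r n x = 1]) =
         ((lam n * p + (1 - lam n) *
             ((\sum_(1 <= i < n) (b i)%:R) / n.-1%:R))%:E
          * P (history r n b))%E).

Definition q n b := Pr (history r n.+1 b).
Definition cc n (b : nat -> bool) := if n == 0%N then p else
  lam n.+1 * p + (1 - lam n.+1) * ((\sum_(1 <= i < n.+1) (b i)%:R) / n%:R).

Lemma lam_neq0 i : (1 <= i)%N -> lam i != 0.
Proof.
case: i => // -[|i] _; first by rewrite lam1 oner_neq0.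
by have /andP[/lt0r_neq0 -> _] := lampos i.+2 isT.
Qed.

Lemma q_true n b : q n.+1 (upd b n.+1 true) = cc n b * q n b.
Proof.
rewrite /q hist_upd /= mulr1n; case: n => [|n].
  by rewrite hist1 setTI /cc /= PrT mulr1 /Pr hp1.
have H := hcond n.+2 b isT.
by rewrite /Pr H (PrE _ (meas_hist _ _)) -EFinM /= /cc /=.
Qed.

Lemma q_false n b : q n.+1 (upd b n.+1 false) = (1 - cc n b) * q n b.
Proof.
have := @Pr_split _ n.+1 (meas_hist n.+1 b).
have := q_true n b; rewrite /q !hist_upd /= mulr1n mulr0n => ->.
set a := Pr (_ `&` [set x | r n.+1 x = 0]); set h := Pr (history r n.+1 b).
move=> E; have -> : a = h - cc n b * h by rewrite {1}E; ring.
ring.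
Qed.

Definition S w n b := \sum_(1 <= i < n.+1) w i * (rhat lam (rb b) i tt - p).
Definition V w n := sumH n (fun b => q n b * S w n b ^+ 2).

Lemma S_upd w n b c : S w n (upd b n.+1 c) = S w n b.
Proof.
apply: eq_big_nat => i /andP[i1 iln]; congr (_ * (_ - _)).
apply: rhat_loc => // j /andP[j1 ji]; rewrite /rb /upd.
suff -> : (j == n.+1) = false by [].
apply/negbTE; rewrite neq_ltn (leq_ltn_trans ji) //.
Qed.

Lemma rhat_last n b (c : bool) :
  rhat lam (rb (upd b n.+1 c)) n.+1 tt - p = (c%:R - cc n b) / lam n.+1.
Proof.
case: n => [|n].
  by rewrite /rhat /= /rb /upd /= /cc /= lam1 divr1.
rewrite /rhat /= /rb /upd eqxx /cc /=.
have -> : pbar (fun i (_ : unit) => ((if i == n.+2 then c else b i)%:R : R)) n.+1 tt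
   = (\sum_(1 <= i < n.+2) (b i)%:R) / n.+1%:R.
  rewrite /pbar; congr (_ / _); apply: eq_big_nat => i /andP[_ iln].
  suff -> : (i == n.+2) = false by [].
  by apply/negbTE; rewrite neq_ltn iln.
have ln0 := @lam_neq0 n.+2 isT.
by field; rewrite ln0 addrC natr1 pnatr_eq0.
Qed.

Lemma S_succ w n b (c : bool) : S w n.+1 (upd b n.+1 c) =
  S w n b + w n.+1 * ((c%:R - cc n b) / lam n.+1).
Proof.
rewrite {1}/S big_nat_recr //=; congr (_ + _); first exact: S_upd.
by rewrite rhat_last.
Qed.

Lemma sumq n : sumH n (q n) = 1.
Proof.
have := @partition n setT (@measurableT _ T); rewrite PrT => ->.
by congr (sumH n _); apply: funext => b; rewrite setTI.
Qed.

Lemma V_succ w n : V w n.+1 <= V w n + (w n.+1 / lam n.+1) ^+ 2.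
Proof.
rewrite /V /=.
rewrite (_ : (fun b => _) = fun b => q n b * S w n b ^+ 2 +
   q n b * ((w n.+1 / lam n.+1) ^+ 2 * (cc n b * (1 - cc n b)))); last first.
  apply: funext => b; rewrite q_true q_false !S_succ /=; ring.
rewrite sumH_add lerD //.
apply: le_trans (@sumH_le _ n _ (fun b => (w n.+1 / lam n.+1) ^+ 2 * q n b) _) _.
  move=> b; rewrite mulrCA ler_wpM2l ?sqr_ge0 //.
  apply: ler_piMr; first exact: Pr_ge0.
  set z := cc n b; nra.
by rewrite sumH_scale sumq mulr1.
Qed.

Lemma V_bound w n : V w n <= \sum_(1 <= i < n.+1) (w i / lam i) ^+ 2.
Proof.
elim: n => [|n IH].
  by rewrite /V /= /S !big_geq // expr2 !mulr0.
apply: le_trans (V_succ w n) _.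
by rewrite [X in _ <= X]big_nat_recr //= lerD.
Qed.

Definition beta x : nat -> bool := fun i => r i x == 1.

Lemma r_beta i x : r i x = (beta x i)%:R.
Proof.
by rewrite /beta; case: (r01 i x) => -> /=; rewrite ?eqxx // eq_sym oner_eq0.
Qed.

Lemma upd_same (b : nat -> bool) k : upd b k (b k) = b.
Proof. by apply: funext => i; rewrite /upd; case: eqP => [->|]. Qed.

Lemma meas_loc n (Phi : (nat -> bool) -> Prop) :
  (forall b b', (forall i, (1 <= i <= n)%N -> b i = b' i) -> Phi b -> Phi b') ->
  measurable [set x | Phi (beta x)].
Proof.
elim: n Phi => [|n IH] Phi loc.
  case: (pselect (Phi (fun _ => false))) => H.
    rewrite (_ : [set x | _] = setT) //; apply/seteqP; split => x //= _.
    by apply: loc H => i /andP[i1 i0]; move: (leq_trans i1 i0).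
  rewrite (_ : [set x | _] = set0) //; apply/seteqP; split => x //= Hx.
  by apply: H; apply: loc Hx => i /andP[i1 i0]; move: (leq_trans i1 i0).
have -> : [set x | Phi (beta x)] =
  ([set x | r n.+1 x = 1] `&` [set x | Phi (upd (beta x) n.+1 true)]) `|`
  ([set x | r n.+1 x = 0] `&` [set x | Phi (upd (beta x) n.+1 false)]).
  apply/seteqP; split => x /=.
  - case: (r01 n.+1 x) => rx Hx.
      right; split => //.
      have <- : beta x n.+1 = false by rewrite /beta rx eq_sym oner_eq0.
      by rewrite upd_same.
    left; split => //.
    have <- : beta x n.+1 = true by rewrite /beta rx eqxx.
    by rewrite upd_same.
  - case=> -[rx].
      have <- : beta x n.+1 = true by rewrite /beta rx eqxx.
      by rewrite upd_same.
    have <- : beta x n.+1 = false by rewrite /beta rx eq_sym oner_eq0.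
    by rewrite upd_same.
have locc c : forall b b', (forall i, (1 <= i <= n)%N -> b i = b' i) ->
    Phi (upd b n.+1 c) -> Phi (upd b' n.+1 c).
  move=> b b' bb'; apply: loc => i /andP[i1 iln]; rewrite /upd.
  case: eqP => // ine; apply: bb'; rewrite i1 /=.
  by rewrite leq_eqVlt in iln; case/orP: iln => [/eqP//|]; rewrite ltnS.
apply: measurableU; apply: measurableI; try exact: meas_r.
- exact: (IH (fun b => Phi (upd b n.+1 true)) (locc true)).
- exact: (IH (fun b => Phi (upd b n.+1 false)) (locc false)).
Qed.

Definition W (w : nat -> R) n := \sum_(1 <= i < n.+1) w i.

Lemma phat_S w n b : W w n != 0 -> phat w lam (rb b) n tt - p = S w n b / W w n.
Proof.
rewrite /phat /S /W => Wn0.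
have -> : \sum_(1 <= i < n.+1) w i * (rhat lam (rb b) i tt - p) =
   \sum_(1 <= i < n.+1) w i * rhat lam (rb b) i tt - (\sum_(1 <= i < n.+1) w i) * p.
  by rewrite mulr_suml -sumrB; apply: eq_bigr => i _; rewrite mulrBr.
by field.
Qed.

Lemma meas_A w n eps : measurable [set x | eps < `|phat w lam r n x - p|].
Proof.
have -> : [set x | eps < `|phat w lam r n x - p|] =
   [set x | (fun b => eps < `|phat w lam (rb b) n tt - p|) (beta x)].
  apply: funext => x /=.
  by rewrite (@phat_loc _ _ _ w lam r (rb (beta x)) x tt n) // => i _; exact: r_beta.
apply: (@meas_loc n (fun b => eps < `|phat w lam (rb b) n tt - p|)) => b b' bb'.
by rewrite (@phat_loc _ _ _ w lam (rb b) (rb b') tt tt n) // => i /bb' Hi; rewrite /rb Hi.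
Qed.

Lemma Abound w n eps : 0 < eps -> W w n != 0 ->
  Pr [set x | eps < `|phat w lam r n x - p|] <=
  (eps ^+ 2)^-1 * ((\sum_(1 <= i < n.+1) (w i / lam i) ^+ 2) / W w n ^+ 2).
Proof.
move=> e0 Wn0; set A := [set x | _].
rewrite (@partition n A (meas_A w n eps)).
apply: le_trans (@sumH_le _ n _
   (fun b => (eps ^+ 2 * W w n ^+ 2)^-1 * (q n b * S w n b ^+ 2)) _) _.
  move=> b.
  have HA : A `&` history r n.+1 b =
      if eps < `|S w n b / W w n| then history r n.+1 b else set0.
    have E x : history r n.+1 b x ->
        phat w lam r n x = phat w lam (rb b) n tt.
      move=> Hx; apply: phat_loc => i /andP[i1 iln]; apply: Hx.
      by rewrite i1 ltnS.
    rewrite -phat_S //; case: ifP => h; apply/seteqP; split => x /=.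
    - by case.
    - by move=> Hx; split => //; rewrite /A /= E.
    - by case=> Ax Hx; move: Ax; rewrite /A /= E // h.
    - by [].
  have K0 : 0 < eps ^+ 2 * W w n ^+ 2.
    apply: mulr_gt0; first exact: exprn_gt0.
    by rewrite lt0r sqrf_eq0 Wn0 sqr_ge0.
  rewrite HA; case: ifP => h; last first.
    rewrite Pr0 mulr_ge0 // ?invr_ge0 ?(ltW K0) // mulr_ge0 ?sqr_ge0 //.
    exact: Pr_ge0.
  rewrite mulrCA; apply: ler_peMr; first exact: Pr_ge0.
  rewrite mulrC ler_pdivlMr // mul1r.
  rewrite normrM normfV ltr_pdivlMr ?normr_gt0 // in h.
  rewrite -(real_normK (num_real (S w n b))) -(real_normK (num_real (W w n))).
  have := normr_ge0 (W w n); have := normr_ge0 (S w n b).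
  set s := `|S w n b|; set v := `|W w n|; move=> s0 v0.
  have h' : eps * v < s by exact: h.
  have ev0 : 0 <= eps * v by rewrite mulr_ge0 // ltW.
  rewrite -exprMn; set ev := eps * v in h' ev0 *; nra.
rewrite sumH_scale -/(V w n) invfM -mulrA ler_wpM2l ?invr_ge0 ?sqr_ge0 //.
by rewrite mulrC ler_wpM2r ?invr_ge0 ?sqr_ge0 // V_bound.
Qed.

Lemma consist w : (forall n, (0 < n)%N -> W w n != 0) ->
  (fun n => (\sum_(1 <= i < n.+1) (w i / lam i) ^+ 2) / W w n ^+ 2) @ \oo --> 0 ->
  consistent P (phat w lam r) p.
Proof.
move=> Wn0 hyp eps e0.
apply: cvg_EFin; first by near=> n; apply: fin_num_measure; apply: meas_A.
apply: (@squeeze_cvgr _ _ _ _ (fun _ => 0)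
  (fun n => (eps ^+ 2)^-1 * ((\sum_(1 <= i < n.+1) (w i / lam i) ^+ 2) / W w n ^+ 2))).
- near=> n; apply/andP; split; first exact: Pr_ge0.
  apply: Abound => //; apply: Wn0.
  by near: n; exact: nbhs_infty_gt.
- exact: cvg_cst.
- have := @cvgMl_tmp R nat \oo _ _ ((eps ^+ 2)^-1) 0 hyp.
  by rewrite mulr0; apply; exact: _.
Unshelve. all: end_near.
Qed.

End Model.
End Prob.

Theorem corollaryA15 (R : realType) (d : measure_display) (T : measurableType d)
  (P : probability T R) (p : R) (lam : nat -> R) (r : nat -> T -> R) :
  0 < p < 1 ->
  lam 1%N = 1 ->
  (forall n, (1 < n)%N -> 0 < lam n <= lam n.-1) ->
  reinforced_model P p lam r ->
  ((fun n : nat => (\sum_(1 <= i < n.+1) (lam i)^-2) / (n%:R ^+ 2)) @ \oo --> 0 ->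
     consistent P (phat (fun _ => 1) lam r) p)
  /\
  ((fun n : nat => n%:R / (\sum_(1 <= i < n.+1) lam i) ^+ 2) @ \oo --> 0 ->
     consistent P (phat lam lam r) p).
Proof.
move=> _ lam1 lampos [rmeas r01 hp1 hcond]; split => hyp.
- apply: (@consist R d T P r rmeas r01 p lam lam1 lampos hp1 hcond (fun _ => 1)).
    move=> n n0; rewrite /W sumr_const_nat subn1 /= pnatr_eq0 -lt0n //.
  suff -> : (fun n => (\sum_(1 <= i < n.+1) (1 / lam i) ^+ 2) / W R (fun _ => 1) n ^+ 2)
     = (fun n : nat => (\sum_(1 <= i < n.+1) (lam i)^-2) / (n%:R ^+ 2)) by [].
  apply: funext => n; congr (_ / _).
    by apply: eq_bigr => i _; rewrite div1r exprVn.
  by rewrite /W sumr_const_nat subn1.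
- have lpos i : (1 <= i)%N -> 0 < lam i.
    case: i => // -[|i] _; first by rewrite lam1 ltr01.
    by have /andP[] := lampos i.+2 isT.
  have Wpos n : 0 < \sum_(1 <= i < n.+2) lam i.
    elim: n => [|n IH]; first by rewrite big_nat1 lam1 ltr01.
    by rewrite big_nat_recr //= addr_gt0 // lpos.
  apply: (@consist R d T P r rmeas r01 p lam lam1 lampos hp1 hcond lam).
    by case=> // n _; rewrite /W lt0r_neq0 // Wpos.
  suff -> : (fun n => (\sum_(1 <= i < n.+1) (lam i / lam i) ^+ 2) / W R lam n ^+ 2)
     = (fun n : nat => n%:R / (\sum_(1 <= i < n.+1) lam i) ^+ 2) by [].
  apply: funext => n; congr (_ / _).
  rewrite (eq_big_nat _ _ (F2 := fun _ => 1)); first by rewrite sumr_const_nat subn1.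
  move=> i /andP[i1 _]; rewrite divff ?expr1n //.
  by rewrite lt0r_neq0 // lpos.
Qed.
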